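(* Let $\Gamma$ be a finite undirected graph with girth $g(\Gamma)\ge 5$. Then $G_{aut}^+(\Gamma)=G_{aut}^*(\Gamma)$; that is, the generators of $C(G_{aut}^+(\Gamma))$ satisfy $u_{ij}u_{kl}=u_{kl}u_{ij}$ for all $i,j,k,l$ with $(i,k)\in E$ and $(j,l)\in E$.
   Context: $\Gamma=(V,E)$ is a finite simple undirected graph, $V=\{1,\dots,n\}$. The girth is the length of a shortest cycle in $\Gamma$. $C(G_{aut}^+(\Gamma))$ is the universal unital $C^*$-algebra generated by $u_{ij}$, $1\le i,j\le n$, with relations: (R1) $u_{ij}=u_{ij}^*=u_{ij}^2$; (R2) $\sum_{l} u_{il}=1=\sum_{l} u_{li}$ for all $i$; (R3) $u_{ij}u_{kl}=u_{kl}u_{ij}=0$ whenever exactly one of $(i,k)\in E$, $(j,l)\in E$ holds. $C(G_{aut}^*(\Gamma))$ is the quotient by the additional relations (R4) $u_{ij}u_{kl}=u_{kl}u_{ij}$ for all $(i,k)\in E$, $(j,l)\in E$; ''$G_{aut}^+(\Gamma)=G_{aut}^*(\Gamma)$'' means (R4) already holds in $C(G_{aut}^+(\Gamma))$. *)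

(* Defs.v *)
From Stdlib Require Import Reals.
From HB Require Import structures.
From mathcomp Require Import all_boot all_order all_algebra.

Set Implicit Arguments.
Unset Strict Implicit.
Unset Printing Implicit Defensive.

Definition Cplx : Type := (R * R)%type.
Definition Cadd (a b : Cplx) : Cplx := (Rplus a.1 b.1, Rplus a.2 b.2).
Definition Cmul (a b : Cplx) : Cplx :=
  (Rminus (Rmult a.1 b.1) (Rmult a.2 b.2), Rplus (Rmult a.1 b.2) (Rmult a.2 b.1)).
Definition Cconj (a : Cplx) : Cplx := (a.1, Ropp a.2).
Definition Cone : Cplx := (R1, R0).
Definition Cabs (a : Cplx) : R := sqrt (Rplus (Rmult a.1 a.1) (Rmult a.2 a.2)).

Record is_unital_cstar_algebra (A : pzRingType) (smul : Cplx -> A -> A)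
    (star : A -> A) (norm : A -> R) : Prop := {
  smulDl : forall a b x, smul (Cadd a b) x = (smul a x + smul b x)%R;
  smulDr : forall a x y, smul a (x + y)%R = (smul a x + smul a y)%R;
  smulA  : forall a b x, smul (Cmul a b) x = smul a (smul b x);
  smul1  : forall x, smul Cone x = x;
  smulMl : forall a x y, smul a (x * y)%R = (smul a x * y)%R;
  smulMr : forall a x y, smul a (x * y)%R = (x * smul a y)%R;
  starK  : forall x, star (star x) = x;
  starD  : forall x y, star (x + y)%R = (star x + star y)%R;
  starM  : forall x y, star (x * y)%R = (star y * star x)%R;
  starZ  : forall a x, star (smul a x) = smul (Cconj a) (star x);
  norm_ge0 : forall x, Rle R0 (norm x);
  norm_eq0 : forall x, norm x = R0 -> x = 0%R;
  norm_triangle : forall x y, Rle (norm (x + y)%R) (Rplus (norm x) (norm y));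
  normZ : forall a x, norm (smul a x) = Rmult (Cabs a) (norm x);
  norm_subM : forall x y, Rle (norm (x * y)%R) (Rmult (norm x) (norm y));
  norm_cstar : forall x, norm (star x * x)%R = Rmult (norm x) (norm x);
  norm_complete : forall s : nat -> A,
    (forall eps, Rlt R0 eps -> exists N : nat, forall p q : nat,
        (N <= p)%N -> (N <= q)%N -> Rlt (norm (s p - s q)%R) eps) ->
    exists x : A, forall eps, Rlt R0 eps -> exists N : nat, forall p : nat,
        (N <= p)%N -> Rlt (norm (s p - x)%R) eps
}.

Definition simple_graph (n : nat) (e : rel 'I_n) : Prop :=
  symmetric e /\ irreflexive e.

Definition has_cycle_of_length (n : nat) (e : rel 'I_n) (m : nat) : Prop :=
  exists s : seq 'I_n, [/\ size s = m, (3 <= m)%N, uniq s & cycle e s].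

(* girth(e) >= g, with the convention girth = infinity for acyclic graphs *)
Definition girth_ge (n : nat) (e : rel 'I_n) (g : nat) : Prop :=
  forall m, has_cycle_of_length e m -> (g <= m)%N.

Definition graph_magic_unitary (n : nat) (e : rel 'I_n) (A : pzRingType)
    (star : A -> A) (u : 'I_n -> 'I_n -> A) : Prop :=
  [/\ forall i j, u i j = star (u i j) /\ u i j = (u i j * u i j)%R,
      forall i, (\sum_(l < n) u i l)%R = 1%R /\ (\sum_(l < n) u l i)%R = 1%R
    & forall i j k l, (e i k != e j l) ->
         (u i j * u k l)%R = 0%R /\ (u k l * u i j)%R = 0%R].

(* Main.v *)
Set Warnings "-notation-overridden -ambiguous-paths".
Require Import Defs.
From Stdlib Require Import Reals.
From HB Require Import structures.
From mathcomp Require Import all_boot all_order all_algebra.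
Import GRing.Theory.
Local Open Scope ring_scope.

Lemma star_basics {A : pzRingType} {smul : Cplx -> A -> A} {star : A -> A} {norm : A -> R}
    (HA : is_unital_cstar_algebra smul star norm) :
  star 1 = 1 /\ (forall x, star (- x) = - star x).
Proof.
have s1 : star 1 = 1.
  have := starM HA (star 1) 1.
  by rewrite mulr1 (starK HA) mulr1 => H; rewrite -H.
split=> //.
have s0 : star 0 = 0.
  have := starD HA 0 0; rewrite addr0 => H.
  by apply: (@addrI _ (star 0)); rewrite addr0 -H.
move=> x; apply/eqP; rewrite -subr_eq0 opprK -(starD HA) addNr s0 //.
Qed.

Lemma norm_zero {A : pzRingType} {smul : Cplx -> A -> A} {star : A -> A} {norm : A -> R}
    (HA : is_unital_cstar_algebra smul star norm) : norm 0 = R0.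
Proof.
have hz : forall x, smul (R0, R0) x = 0.
  move=> x; have := smulDl HA (R0, R0) (R0, R0) x.
  rewrite /Cadd /= Rplus_0_l => H.
  by apply: (@addrI _ (smul (R0, R0) x)); rewrite addr0 -H.
have := normZ HA (R0, R0) 0; rewrite hz /Cabs /= Rmult_0_l Rplus_0_l sqrt_0 Rmult_0_l //.
Qed.

Lemma cstar_eq0 {A : pzRingType} {smul : Cplx -> A -> A} {star : A -> A} {norm : A -> R}
    (HA : is_unital_cstar_algebra smul star norm) (x : A) : star x * x = 0 -> x = 0.
Proof.
move=> H; apply: (norm_eq0 HA).
have := norm_cstar HA x; rewrite H (norm_zero HA) => /esym /Rmult_integral; by case.
Qed.

Lemma final_step {A : pzRingType} {smul : Cplx -> A -> A} {star : A -> A} {norm : A -> R}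
    (HA : is_unital_cstar_algebra smul star norm) (P Q : A) :
  star P = P -> P * P = P -> star Q = Q -> Q * Q = Q ->
  P * Q * (1 - P) = P * Q * (1 - P) * (Q * (1 - P)) -> P * Q = Q * P.
Proof.
move=> sP iP sQ iQ.
have [s1 sN] := star_basics HA.
set X := P * Q * (1 - P) => HX.
have iP' : (1 - P) * (1 - P) = 1 - P.
  by rewrite mulrBr mulr1 mulrBl mul1r iP subrr subr0.
have sP' : star (1 - P) = 1 - P by rewrite (starD HA) sN s1 sP.
have sX : star X = (1 - P) * Q * P by rewrite /X !(starM HA) sP sQ sP' mulrA.
set R0' := (1 - P) * Q * (1 - P).
have XR : X = X * R0'.
  have X1 : X * (1 - P) = X by rewrite /X -mulrA iP'.
  by rewrite {1}HX /R0' !mulrA X1.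
set Y := star X * X.
have YR : Y = Y * R0' by rewrite /Y -mulrA -XR.
have RY : R0' = Y + R0' * R0'.
  rewrite /Y sX /X /R0'.
  have -> : (1 - P) * Q * (1 - P) * ((1 - P) * Q * (1 - P)) =
            (1 - P) * Q * (1 - P) * Q * (1 - P).
    by rewrite !mulrA; congr (_ * _ * _); rewrite -mulrA iP'.
  have -> : (1 - P) * Q * P * (P * Q * (1 - P)) = (1 - P) * Q * P * Q * (1 - P).
    by rewrite !mulrA; congr (_ * _ * _); rewrite -mulrA iP.
  by rewrite -!mulrDl -mulrDr (addrC P) subrK mulr1 -(mulrA _ Q Q) iQ.
have YY : Y * Y = 0.
  have Ye : Y = R0' - R0' * R0' by rewrite {1}RY addrK.
  by rewrite {2}Ye mulrBr (mulrA Y R0' R0') -!YR subrr.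
have sY : star Y = Y by rewrite /Y (starM HA) (starK HA).
have Y0 : Y = 0 by apply: (cstar_eq0 HA); rewrite sY.
have X0 : X = 0 by apply: (cstar_eq0 HA).
have E1 : P * Q = P * Q * P.
  by apply/eqP; rewrite -subr_eq0 -[X in X - _]mulr1 -mulrBr -/X X0.
have := congr1 star E1; rewrite !(starM HA) sP sQ mulrA => ->.
exact E1.
Qed.

Lemma sum_restrict (A : nmodType) (n : nat) (F : 'I_n -> A) (Pr : pred 'I_n) :
  (forall x, ~~ Pr x -> F x = 0) -> \sum_x F x = \sum_(x | Pr x) F x.
Proof.
move=> H; rewrite (bigID Pr) /= [X in _ + X]big1 ?addr0 //.
Qed.

Theorem theorem3p4 (n : nat) (e : rel 'I_n) (Hsimple : simple_graph e)
    (Hgirth : girth_ge e 5)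
    (A : pzRingType) (smul : Cplx -> A -> A) (star : A -> A) (norm : A -> R)
    (HA : is_unital_cstar_algebra smul star norm)
    (u : 'I_n -> 'I_n -> A) (Hu : graph_magic_unitary e star u) :
  forall i j k l : 'I_n, e i k -> e j l -> (u i j * u k l)%R = (u k l * u i j)%R.
Proof.
move=> i j k l Hik Hjl.
case: Hsimple => Hsym Hirr.
case: Hu => R1 R2 R3.
have Z : forall a b c d, e a c != e b d -> u a b * u c d = 0.
  by move=> a b c d H; case: (R3 a b c d H).
have Hki : e k i by rewrite Hsym.
have Hlj : e l j by rewrite Hsym.
have neq_of_e : forall a b, e a b -> a != b.
  by move=> a b H; apply/eqP => ab; move: H; rewrite ab Hirr.
have gf : forall s c, e k s -> s != i -> e s c -> e c i -> c = k.
  move=> s c eks si esc eci; apply/eqP; apply: contraT => ck.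
  have : (5 <= 4)%N; last by [].
  apply: Hgirth; exists [:: k; s; c; i]; split => //.
    rewrite /= !inE !negb_or neq_of_e // (eq_sym k c) ck (eq_sym k i) neq_of_e //=.
    by rewrite neq_of_e //= si neq_of_e.
  by rewrite /= eks esc eci Hik.
set P := u i j; set Q := u k l.
have [sP iP] : star P = P /\ P * P = P by case: (R1 i j) => a b; split; rewrite -?a -?b.
have [sQ iQ] : star Q = Q /\ Q * Q = Q by case: (R1 k l) => a b; split; rewrite -?a -?b.
have dist2 : forall s q, e k s -> s != i -> e l q -> u s j * u i q = u s j * Q * u i q.
  move=> s q eks si elq.
  have -> : u s j * u i q = \sum_c u s j * u c l * u i q.
    by rewrite -mulr_suml -mulr_sumr (R2 l).2 mulr1.
  rewrite (bigD1 k) //= big1 ?addr0 // => c ck.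
  case: (boolP (e s c)) => esc; last by rewrite Z ?mul0r // (negbTE esc) Hjl.
  case: (boolP (e c i)) => eci; first by rewrite (gf s c) ?eqxx in ck.
  by rewrite -mulrA Z ?mulr0 // (negbTE eci) elq.
have E : \sum_(q | e l q) u i q = \sum_(t | e i t) u t l.
  have -> : \sum_(q | e l q) u i q = \sum_(q | e l q) \sum_(t | e i t) u i q * u t l.
    apply: eq_bigr => q elq.
    rewrite -(@sum_restrict _ _ (fun t => u i q * u t l)); last first.
      by move=> t eit; rewrite Z // (negbTE eit) Hsym elq.
    by rewrite -mulr_sumr (R2 l).2 mulr1.
  rewrite exchange_big /=; apply: eq_bigr => t eit.
  rewrite -(@sum_restrict _ _ (fun q => u i q * u t l)); last first.
    by move=> q elq; rewrite Z // eit Hsym (negbTE elq).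
  by rewrite -mulr_suml (R2 i).1 mul1r.
have Ee : P * \sum_(q | e l q) u i q = P.
  rewrite E mulr_sumr -(@sum_restrict _ _ (fun t => P * u t l)); last first.
    by move=> t eit; rewrite Z // (negbTE eit) Hjl.
  by rewrite -mulr_sumr (R2 l).2 mulr1.
set X := P * Q * (1 - P).
have S1 : X = \sum_(s | e k s && (s != i)) P * Q * u s j.
  have : P * Q = \sum_(s | e k s) P * Q * u s j.
    rewrite -(@sum_restrict _ _ (fun s => P * Q * u s j)); last first.
      by move=> s eks; rewrite -mulrA Z ?mulr0 // (negbTE eks) Hlj.
    by rewrite -mulr_sumr (R2 j).2 mulr1.
  rewrite (bigD1 i) //= => H.
  rewrite /X mulrBr mulr1; apply: (@addrI _ (P * Q * P)).
  by rewrite [LHS]addrC subrK; exact H.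
have S4 : X = \sum_(q | e l q && (q != j)) P * Q * u i q.
  have : P * Q = \sum_(q | e l q) P * Q * u i q.
    rewrite -(@sum_restrict _ _ (fun q => P * Q * u i q)); last first.
      by move=> q elq; rewrite -mulrA Z ?mulr0 // Hki (negbTE elq).
    by rewrite -mulr_sumr (R2 i).1 mulr1.
  rewrite (bigD1 j) //= => H.
  rewrite /X mulrBr mulr1; apply: (@addrI _ (P * Q * P)).
  by rewrite [LHS]addrC subrK; exact H.
have S2 : Q * \sum_(q | e l q && (q != j)) u i q = Q * (1 - P).
  have : Q = \sum_(q | e l q) Q * u i q.
    rewrite -(@sum_restrict _ _ (fun q => Q * u i q)); last first.
      by move=> q elq; rewrite Z // Hki (negbTE elq).
    by rewrite -mulr_sumr (R2 i).1 mulr1.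
  rewrite (bigD1 j) //= => H.
  rewrite mulr_sumr mulrBr mulr1; apply: (@addrI _ (Q * P)).
  by rewrite [RHS]addrC subrK; symmetry; exact H.
have S2' : P * \sum_(q | e l q && (q != j)) u i q = 0.
  move: Ee; rewrite (bigD1 j) //= -/P mulrDr iP => H.
  by apply: (@addrI _ P); rewrite addr0.
have S3 : forall q, e l q -> q != j ->
    P * Q * u i q = P * Q * P * u i q +
      \sum_(s | e k s && (s != i)) P * Q * u s j * Q * u i q.
  move=> q elq qj.
  have -> : P * Q * u i q = \sum_(s | e k s) P * Q * u s j * u i q.
    rewrite -(@sum_restrict _ _ (fun s => P * Q * u s j * u i q)); last first.
      by move=> s eks; rewrite -(mulrA P) Z ?mulr0 ?mul0r // (negbTE eks) Hlj.
    by rewrite -mulr_suml -mulr_sumr (R2 j).2 mulr1.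
  rewrite (bigD1 i) //=; congr (_ + _).
  apply: eq_bigr => s /andP [eks si].
  by rewrite -!mulrA dist2 // !mulrA.
have XX : X = X * (Q * (1 - P)).
  rewrite {1}S4 (eq_bigr (fun q => P * Q * P * u i q +
      \sum_(s | e k s && (s != i)) P * Q * u s j * Q * u i q)); last first.
    by move=> q /andP [a b]; exact: S3.
  rewrite big_split /=.
  have -> : \sum_(q | e l q && (q != j)) P * Q * P * u i q = 0.
    by rewrite -mulr_sumr -(mulrA (P * Q) P) S2' mulr0.
  rewrite add0r exchange_big /=.
  rewrite (eq_bigr (fun s => P * Q * u s j * (Q * (1 - P)))); last first.
    move=> s _; rewrite -S2 !mulr_sumr; apply: eq_bigr => q _; by rewrite !mulrA.
  by rewrite -mulr_suml -S1.
exact: (final_step HA _ _ sP iP sQ iQ XX).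
Qed.
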